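(* Let $q$ be a prime power and let $\mathcal{F}=(\mathcal{F}_1,\ldots,\mathcal{F}_r)$ be a flag on $\mathbb{F}_{q^n}$. Then $\mathrm{Stab}^+(\mathcal{F})$ is the best friend of $\mathcal{F}$ and it contains every friend $\mathbb{F}_{q^m}$ of $\mathcal{F}$. Moreover, if $1\in\mathcal{F}_1$, then $\mathbb{F}_{q^m}\subseteq\mathrm{Stab}^+(\mathcal{F})\subseteq\mathcal{F}_1$ for every friend $\mathbb{F}_{q^m}$ of $\mathcal{F}$.
   Context: A flag on $\mathbb{F}_{q^n}$ is a sequence $(\mathcal{F}_1,\ldots,\mathcal{F}_r)$ of $\mathbb{F}_q$-subspaces with $\{0\}\subsetneq\mathcal{F}_1\subsetneq\cdots\subsetneq\mathcal{F}_r\subsetneq\mathbb{F}_{q^n}$. For $\gamma\in\mathbb{F}_{q^n}^*$, $\mathcal{F}\gamma=(\mathcal{F}_1\gamma,\ldots,\mathcal{F}_r\gamma)$ with $\mathcal{U}\gamma=\{u\gamma:u\in\mathcal{U}\}$; $\mathrm{Stab}(\mathcal{F})=\{\gamma\in\mathbb{F}_{q^n}^*:\mathcal{F}\gamma=\mathcal{F}\}$, and $\mathrm{Stab}^+(\mathcal{F})$ is the smallest subfield of $\mathbb{F}_{q^n}$ containing $\mathbb{F}_q$ and $\mathrm{Stab}(\mathcal{F})$. A subfield $\mathbb{F}_{q^m}$ of $\mathbb{F}_{q^n}$ is a friend of $\mathcal{F}$ if every $\mathcal{F}_i$ is a vector space over $\mathbb{F}_{q^m}$; the best friend of $\mathcal{F}$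 is its largest friend. *)

(* Defs.v *)
From HB Require Import structures.
From mathcomp Require Import all_boot all_order all_algebra all_field.
Set Implicit Arguments. Unset Strict Implicit. Unset Printing Implicit Defensive.
Import GRing.Theory.
Local Open Scope ring_scope.
Local Open Scope vspace_scope.

(* Setting: F = F_q a finite field, L = F_{q^n} a finite-dimensional field
   extension of F.  {vspace L} = F-subspaces of L; {subfield L} = subfields of L
   containing F. *)

Section FlagDefs.
Variables (F : finFieldType) (L : fieldExtType F).

Definition vsmul (U : {vspace L}) (g : L) : {vspace L} := (U * <[g]>)%VS.

Definition vsproper (U V : {vspace L}) : bool := (U <= V)%VS && (U != V).

Definition is_flag (Fl : seq {vspace L}) : Prop :=
  [/\ (0 < size Fl)%N,
      (forall i, (i < (size Fl).-1)%N ->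
         vsproper (nth 0%VS Fl i) (nth 0%VS Fl i.+1)),
      nth 0%VS Fl 0 != 0%VS &
      vsproper (last 0%VS Fl) fullv].

Definition in_stab (Fl : seq {vspace L}) (g : L) : bool :=
  (g != 0%R) && all (fun U => vsmul U g == U) Fl.

Definition stab (Fl : seq {vspace L}) : {set finvect_type L} :=
  [set g : finvect_type L | in_stab Fl g].

Definition stab_plus (Fl : seq {vspace L}) : {subfield L} :=
  <<1 & (enum (stab Fl) : seq L)>>%VS.

(* K is a friend of F: every F_i is a K-vector space *)
Definition friend (Fl : seq {vspace L}) (K : {subfield L}) : Prop :=
  forall U, U \in Fl -> (K * U <= U)%VS.

Definition best_friend (Fl : seq {vspace L}) (K : {subfield L}) : Prop :=
  friend Fl K /\ forall K' : {subfield L}, friend Fl K' -> (\dim K' <= \dim K)%N.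

End FlagDefs.

(* Main.v *)
Require Import Defs.
From HB Require Import structures.
From mathcomp Require Import all_boot all_order all_algebra all_field.
Local Open Scope ring_scope.

Section Helpers.
Variables (F : finFieldType) (L : fieldExtType F).
Local Open Scope vspace_scope.

Lemma span_mod (s : seq L) (U : {vspace L}) :
  (forall x, x \in s -> <[x]> * U <= U) -> <<s>> * U <= U.
Proof.
elim: s => [|x s IH] H; first by rewrite span_nil prod0v sub0v.
rewrite span_cons prodvDl subv_add H ?mem_head //= IH // => y ys.
by apply: H; rewrite inE ys orbT.
Qed.

Lemma stab_mod (Fl : seq {vspace L}) (U : {vspace L}) :
  U \in Fl -> stab_plus Fl * U <= U.
Proof.
move=> UF; rewrite /stab_plus; apply: agenv_modl.
rewrite prodvDl subv_add prod1v subvv /=; apply: span_mod => x.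
move=> xs; have : (x : finvect_type L) \in stab Fl by rewrite -mem_enum.
rewrite inE => /andP [_ /allP /(_ U UF) /eqP].
by rewrite /vsmul prodvC => ->.
Qed.

Lemma friend_sub (Fl : seq {vspace L}) (K : {subfield L}) :
  friend Fl K -> K <= stab_plus Fl.
Proof.
move=> fK; apply/subvP => k kK.
have [->|k0] := eqVneq k 0%R; first exact: mem0v.
apply: seqv_sub_adjoin; have : (k : finvect_type L) \in enum (stab Fl); last by [].
rewrite mem_enum inE /in_stab k0 /=.
apply/allP => U UF; rewrite /vsmul eqEdim.
have sub : U * <[k]> <= U.
  by rewrite prodvC (subv_trans _ (fK U UF)) // prodvSl // -memvE.
rewrite sub /= -limg_amulr limg_dim_eq //.
have /eqP -> := @lker0_amulr _ _ k (etrans (GRing.unitfE k) k0).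
by rewrite capv0.
Qed.
End Helpers.

Theorem proposition3p16 (F : finFieldType) (L : fieldExtType F)
    (Fl : seq {vspace L}) :
  is_flag Fl ->
  [/\ best_friend Fl (stab_plus Fl),
      (forall K : {subfield L}, friend Fl K -> (K <= stab_plus Fl)%VS) &
      (1 \in head 0%VS Fl ->
        forall K : {subfield L}, friend Fl K ->
          (K <= stab_plus Fl)%VS /\ (stab_plus Fl <= head 0%VS Fl)%VS)].
Proof.
case=> sz _ _ _.
have fr : friend Fl (stab_plus Fl) by move=> U; exact: (@stab_mod _ _).
split.
- by split=> // K' /friend_sub /dimvS.
- by move=> K /friend_sub.
move=> h1 K fK; split; first exact: friend_sub.
have hin : head 0%VS Fl \in Fl by clear -sz; case: Fl sz => //= U s _; rewrite mem_head.
apply: (subv_trans _ (@stab_mod _ _ _ _ hin)).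
by rewrite -{1}(prodv1 (stab_plus Fl)) prodvSr // -memvE.
Qed.
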